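(* Let $\omega$ be a closed self-dual 2-form on a neighborhood $N(C)\cong C\times D^3$ of a circle $C$ in an oriented Riemannian 4-manifold, with coordinates $(\theta,x_1,x_2,x_3)$ ($\theta\in C=\mathbb{R}/2\pi\mathbb{Z}$, $x\in D^3$) such that $d\theta,dx_1,dx_2,dx_3$ are orthonormal at each point $(\theta,0)$, and suppose $\omega$ vanishes on $C=C\times\{0\}$ and has the form $$\omega=L_1(\theta,x)(d\theta\, dx_1+dx_2\, dx_3)+L_2(\theta,x)(d\theta\, dx_2+dx_3\, dx_1)+L_3(\theta,x)(d\theta\, dx_3+dx_1\, dx_2)+Q,$$ where $L_i(\theta,x)=\sum_{j=1}^3L_{ij}(\theta)x_j$ and $Q$ is a 2-form whose coefficients are of order at least two in the $x_i$. Then for every $\theta$ the matrix $(L_{ij}(\theta))$ is symmetric and traceless. *)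

(* Defs.v *)
(* Coordinates on R x R^3 : index 0 = theta, 1,2,3 = x_1,x_2,x_3. *)
From HB Require Import structures.
From mathcomp Require Import all_boot all_order all_algebra.
From mathcomp Require Import all_classical all_reals all_analysis.
Set Implicit Arguments. Unset Strict Implicit. Unset Printing Implicit Defensive.
Import Order.TTheory GRing.Theory Num.Theory.
Import numFieldNormedType.Exports.
Local Open Scope ring_scope.

Section Defs.
Variable R : realType.

Definition pt := 'rV[R]_4.

(* index of theta and of x_j (j : 'I_3 stands for x_{j+1}) *)
Definition ith : 'I_4 := ord0.
Definition ix (j : 'I_3) : 'I_4 := lift ord0 j.

Definition ev (a : 'I_4) : pt := delta_mx 0 a.

(* the chart domain C x D^3 (theta in R, with 2pi-periodicity imposed on the data) *)
Definition inN (p : pt) : Prop := \sum_(j < 3) p 0 (ix j) ^+ 2 < 1.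

Definition onC (t : R) : pt := t *: ev ith.

Definition partial (a : 'I_4) (f : pt -> R) (p : pt) : R := derive f p (ev a).

(* a 2-form is given by its antisymmetric coefficient matrix omega_{ab},
   omega = 1/2 sum_{a,b} omega_{ab} dx^a dx^b = sum_{a<b} omega_{ab} dx^a dx^b *)
Definition coef (W : pt -> 'M[R]_4) (a b : 'I_4) : pt -> R := fun p => W p a b.

Definition is_2form (W : pt -> 'M[R]_4) : Prop :=
  forall p, (W p)^T = - W p.

Definition closed_form (W : pt -> 'M[R]_4) : Prop :=
  (forall p a b, inN p -> differentiable (coef W a b) p) /\
  forall p a b c, inN p ->
    partial a (coef W b c) p + partial b (coef W c a) p
      + partial c (coef W a b) p = 0.

(* Levi-Civita symbol eps_{abcd}, orientation d theta dx1 dx2 dx3 *)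
Definition levi (a b c d : 'I_4) : R :=
  \det (\matrix_(i < 4, j < 4) ((tnth [tuple a; b; c; d] i == j)%:R : R)).

Definition riem_metric (G : pt -> 'M[R]_4) : Prop :=
  (forall p a b, inN p -> differentiable (fun q => G q a b) p) /\
  (forall p, inN p -> (G p)^T = G p) /\
  (forall p (v : 'rV[R]_4), inN p -> v != 0 -> 0 < (v *m G p *m v^T) 0 0).

(* Hodge star of a 2-form:
   ( *w)_{cd} = 1/2 sqrt(det g) eps_{abcd} g^{ae} g^{bf} w_{ef} *)
Definition hodge (G W : 'M[R]_4) : 'M[R]_4 :=
  let Wup := invmx G *m W *m invmx G in
  \matrix_(c < 4, d < 4)
    (Num.sqrt (\det G) / 2 * \sum_(a < 4) \sum_(b < 4) levi a b c d * Wup a b).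

Definition self_dual (G W : pt -> 'M[R]_4) : Prop :=
  forall p, inN p -> hodge (G p) (W p) = W p.

Definition theta_periodic (T : Type) (F : pt -> T) : Prop :=
  forall p, F (p + (2 * pi) *: ev ith) = F p.

(* the self-dual basic forms  d theta dx_i + dx_j dx_k  ((i,j,k) cyclic) *)
Definition dm (a b : nat) : 'M[R]_4 := delta_mx (inord a) (inord b).
Definition beta (i : 'I_3) : 'M[R]_4 :=
  match val i with
  | 0 => dm 0 1 - dm 1 0 + dm 2 3 - dm 3 2
  | 1 => dm 0 2 - dm 2 0 + dm 3 1 - dm 1 3
  | _ => dm 0 3 - dm 3 0 + dm 1 2 - dm 2 1
  end.

Definition Lfun (L : 'I_3 -> 'I_3 -> R -> R) (i : 'I_3) (p : pt) : R :=
  \sum_(j < 3) L i j (p 0 ith) * p 0 (ix j).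

Definition linpart (L : 'I_3 -> 'I_3 -> R -> R) (p : pt) : 'M[R]_4 :=
  \sum_(i < 3) Lfun L i p *: beta i.

(* a scalar function is of order at least two in x along C:
   it vanishes on C together with its first x-derivatives *)
Definition order_ge2 (f : pt -> R) : Prop :=
  forall t, f (onC t) = 0 /\ forall j : 'I_3, partial (ix j) f (onC t) = 0.

End Defs.

(* Main.v *)
Require Import Defs.
From HB Require Import structures.
From mathcomp Require Import all_boot all_order all_algebra.
From mathcomp Require Import all_classical all_reals all_analysis.
From mathcomp Require Import lra.
Import Order.TTheory GRing.Theory Num.Theory.
Import numFieldNormedType.Exports.
Local Open Scope ring_scope.
Section S.
Variable R : realType.
Lemma der_lin (f : pt R -> R) a v (C : R) :
  (forall h : R, f (h *: v + a) = f a + h * C) -> derivable f a v /\ derive f a v = C.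
Proof.
move=> H.
have E : \forall h \near dnbhs (0:R), h^-1 *: ((f \o shift a) (h *: v) - f a) = C.
  near=> h.
  have hN0 : h != 0 by near: h; exact: nbhs_dnbhs_neq.
  by rewrite /= /shift /= H addrC addKr /GRing.scale /= mulrA mulVf // mul1r.
split; first exact: (is_cvg_near_cst C).
exact: (lim_near_cst _ E).
Unshelve. all: by end_near. Qed.
Lemma line_th (t h : R) j : (h *: ev R (ix j) + onC t) 0 ith = t.
Proof.
rewrite /onC /ev !mxE /ith /ix eqxx /=.
by rewrite mulr0 mulr1 add0r.
Qed.
Lemma line_x (t h : R) j k : (h *: ev R (ix j) + onC t) 0 (ix k) = h * (k == j)%:R.
Proof.
rewrite /onC /ev !mxE /ith /ix eqxx /= (inj_eq lift_inj).
by rewrite mulr0 addr0.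
Qed.
Lemma lin_line (L : 'I_3 -> 'I_3 -> R -> R) t j b c (h : R) :
  linpart L (h *: ev R (ix j) + onC t) b c =
  linpart L (onC t) b c + h * (\sum_i L i j t * beta R i b c).
Proof.
have H0 := line_x t 0 j. rewrite scale0r add0r in H0.
have E : forall h', linpart L (h' *: ev R (ix j) + onC t) b c = h' * (\sum_i L i j t * beta R i b c).
  move=> h'; rewrite /linpart summxE mulr_sumr; apply: eq_bigr => i _.
  rewrite mxE /Defs.Lfun line_th (bigD1 j) //= big1 ?addr0; last first.
    by move=> k /negbTE kj; rewrite line_x kj mulr0 mulr0.
  by rewrite line_x eqxx mulr1 mulrA [h' * _]mulrC.
by rewrite E -[onC t](add0r) -(scale0r (ev R (ix j))) E mul0r add0r.
Qed.
Lemma eq_inord m (x : 'I_m.+1) n : (n < m.+1)%N -> (x == inord n) = (val x == n).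
Proof. by move=> Hn; rewrite -(inj_eq val_inj) /= inordK. Qed.
Ltac bt := rewrite /beta /dm /= !mxE !eq_inord //= ?inordK //= ?mulr0n ?mulr1n; lra.
Lemma beta_th (i j : 'I_3) : beta R i ith (ix j) = (i == j)%:R.
Proof.
by case: i => [[|[|[|i]]] Hi] //; case: j => [[|[|[|j]]] Hj] //; bt.
Qed.
Lemma beta_xt (i j : 'I_3) : beta R i (ix j) ith = - (i == j)%:R.
Proof.
by case: i => [[|[|[|i]]] Hi] //; case: j => [[|[|[|j]]] Hj] //; bt.
Qed.
Lemma beta_12 (i : 'I_3) : beta R i (ix (inord 1)) (ix (inord 2)) = (i == inord 0)%:R.
Proof. by case: i => [[|[|[|i]]] Hi] //; bt. Qed.
Lemma beta_20 (i : 'I_3) : beta R i (ix (inord 2)) (ix (inord 0)) = (i == inord 1)%:R.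
Proof. by case: i => [[|[|[|i]]] Hi] //; bt. Qed.
Lemma beta_01 (i : 'I_3) : beta R i (ix (inord 0)) (ix (inord 1)) = (i == inord 2)%:R.
Proof. by case: i => [[|[|[|i]]] Hi] //; bt. Qed.

Lemma sum_delta (F : 'I_3 -> R) k : \sum_i F i * (i == k)%:R = F k.
Proof.
rewrite (bigD1 k) //= big1 ?addr0 ?eqxx ?mulr1 //.
by move=> i /negbTE ->; rewrite mulr0.
Qed.

Lemma sum3 (F : 'I_3 -> R) : \sum_i F i = F (inord 0) + F (inord 1) + F (inord 2).
Proof.
rewrite !big_ord_recr big_ord0 /=. rewrite [0 + _]add0r.
by congr (F _ + F _ + F _); apply: val_inj; rewrite /= inordK.
Qed.

End S.

Theorem mainTheorem3 (R : realType) (G W : pt R -> 'M[R]_4)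
    (L : 'I_3 -> 'I_3 -> R -> R) :
  riem_metric G -> theta_periodic G ->
  (forall t, G (onC t) = 1%:M) ->
  is_2form W -> theta_periodic W -> closed_form W -> self_dual G W ->
  (forall t, W (onC t) = 0) ->
  (forall i j t, differentiable (L i j) t) ->
  (forall a b : 'I_4, order_ge2 (fun p => (W p - linpart L p) a b)) ->
  forall t : R, let M := \matrix_(i < 3, j < 3) L i j t in
    M^T = M /\ \tr M = 0.
Proof.
move=> _ _ _ _ _ [Wd Wc] _ W0 _ Hord t M.
have inC : inN (onC t).
  rewrite /inN big1 ?ltr01 // => j _.
  by have := line_x R t 0 j; rewrite scale0r add0r => ->; rewrite mul0r expr0n.
have dW : forall j b c, partial (ix j) (coef W b c) (onC t)
    = \sum_i L i j t * beta R i b c.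
  move=> j b c.
  have [dl Dl] := @der_lin R (fun p => linpart L p b c) _ _ _ (lin_line R L t j b c).
  have dw := diff_derivable (v := ev R (ix j)) (Wd (onC t) b c inC).
  have := (Hord b c t).2 j; rewrite /partial.
  have -> : (fun p => (W p - linpart L p) b c)
      = (coef W b c - (fun p => linpart L p b c)).
    by apply/funext => p; rewrite !mxE.
  by rewrite deriveB // Dl => /eqP; rewrite subr_eq0 => /eqP.
have dT : forall b c, partial ith (coef W b c) (onC t) = 0.
  move=> b c; rewrite /partial.
  suff [_ ->] : derivable (coef W b c) (onC t) (ev R ith) /\
       derive (coef W b c) (onC t) (ev R ith) = 0 by [].
  apply: der_lin => h; rewrite /coef /onC -scalerDl.
  by rewrite (W0 (h + t)) (W0 t) mxE mulr0 addr0.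
split.
  apply/matrixP => j k; rewrite !mxE.
  have := Wc (onC t) ith (ix j) (ix k) inC.
  rewrite dT !dW add0r.
  under eq_bigr do rewrite beta_xt mulrN.
  under [X in _ + X]eq_bigr do rewrite beta_th.
  rewrite sumrN !sum_delta => /eqP; rewrite addrC subr_eq0 => /eqP.
  done.
have := Wc (onC t) (ix (inord 0)) (ix (inord 1)) (ix (inord 2)) inC.
rewrite !dW.
have E : forall (k : 'I_3) a b, (forall i, beta R i a b = (i == k)%:R) ->
  \sum_i L i k t * beta R i a b = L k k t.
  by move=> k a b Hb; rewrite -[RHS](@sum_delta R (fun i => L i k t) k); apply: eq_bigr => i _; rewrite Hb.
rewrite (E _ _ _ (@beta_12 R)) (E _ _ _ (@beta_20 R)) (E _ _ _ (@beta_01 R)) => <-.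
by rewrite /mxtrace sum3 !mxE.
Qed.
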